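(* Let $A$ be an $n\times n$ real matrix with $\operatorname{sign}\det A=(-1)^n$, and assume $A$ has a Hurwitz-stable $(n-1)\times(n-1)$ principal submatrix. Then there exists a positive diagonal matrix $D$ such that $AD$ is Hurwitz-stable.
   Context: A square matrix is Hurwitz-stable if all its eigenvalues have negative real part. *)

(* Defs.v *)
From HB Require Import structures.
From mathcomp Require Import all_boot all_order all_algebra.
From mathcomp Require Import complex.
From mathcomp Require Import reals.
Set Implicit Arguments. Unset Strict Implicit. Unset Printing Implicit Defensive.
Import Order.TTheory GRing.Theory Num.Theory.
Local Open Scope ring_scope.
Local Open Scope complex_scope.

Definition hurwitz_stable (R : realType) (n : nat) (A : 'M[R]_n) : Prop :=
  forall z : R[i], eigenvalue (map_mx (fun x : R => x%:C) A) z -> complex.Re z < 0.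

(* Main.v *)
Require Import Defs.
From HB Require Import structures.
From mathcomp Require Import all_boot all_order all_algebra.
From mathcomp Require Import complex polyrcf.
From mathcomp Require Import reals.
From mathcomp Require Import ring lra.
Set Implicit Arguments. Unset Strict Implicit. Unset Printing Implicit Defensive.
Import Order.TTheory GRing.Theory Num.Theory.
Local Open Scope ring_scope.
Local Open Scope complex_scope.
Lemma char_poly_horner (F : fieldType) n (A : 'M[F]_n) a :
  (char_poly A).[a] = \det (a%:M - A).
Proof.
rewrite horner_sum; apply: eq_bigr => s _.
rewrite hornerM horner_exp !hornerE; congr (_ * _).
rewrite (big_morph _ (fun p q => hornerM p q a) (hornerC 1 a)).
by apply: eq_bigr => i _; rewrite !mxE !(hornerE, hornerMn).
Qed.

Definition dvec (F : comNzRingType) n (i : 'I_n) (e : F) : 'rV[F]_n :=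
  \row_j (if j == i then e else 1).

Lemma liftF n (i : 'I_n.+1) k : (lift i k == i) = false.
Proof. by apply/negbTE; rewrite eq_sym neq_lift. Qed.

Lemma key_det (F : comNzRingType) n (A : 'M[F]_n.+1) i e z :
  \det (z%:M - A *m diag_mx (dvec i e)) =
   (1 - e) * (z * \det (z%:M - row' i (col' i A))) + e * \det (z%:M - A).
Proof.
rewrite -det_tr.
rewrite (@determinant_multilinear _ _ _ (z%:M - A *m diag_mx (dvec i 0))^T (z%:M - A)^T i (1 - e) e); last first.
- by apply/matrixP => k l; rewrite !mul_mx_diag !mxE liftF mulr1.
- by apply/matrixP => k l; rewrite !mul_mx_diag !mxE liftF.
- by apply/rowP => l; rewrite !mul_mx_diag !mxE !eqxx; ring.
rewrite !det_tr; congr (_ * _ + _).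
rewrite (expand_det_col _ i) (bigD1 i) //= big1 ?addr0; last first.
  by move=> k hk; rewrite !mul_mx_diag !mxE eqxx (negPf hk) mulr0n; ring.
rewrite !mul_mx_diag !mxE !eqxx /cofactor.
have -> : (-1) ^+ (i + i) = 1 :> F by rewrite addnn -mul2n exprM expr2 mulrNN mulr1 expr1n.
rewrite mul1r mulr0 subr0 mulr1n; congr (_ * \det _).
apply/matrixP => k l; rewrite !mxE liftF (inj_eq lift_inj).
ring.
Qed.
Section S.
Variable R : realType.
Local Notation C := R[i].
Definition nm (z : C) : R := complex.Re `|z|.
Lemma normE (z : C) : `|z| = (nm z)%:C.
Proof. by rewrite /nm normc_def. Qed.
Lemma nm_ge0 z : 0 <= nm z.
Proof. by rewrite -(@lecR R) rmorph0 -normE. Qed.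
Lemma nmM x y : nm (x * y) = nm x * nm y.
Proof. by apply: complexI; rewrite -normE normrM !normE rmorphM. Qed.
Lemma nmD x y : nm (x + y) <= nm x + nm y.
Proof. by rewrite -(@lecR R) rmorphD -!normE ler_normD. Qed.
Lemma nmN x : nm (- x) = nm x.
Proof. by rewrite /nm normrN. Qed.
Lemma nmR (x : R) : nm x%:C = `|x|.
Proof. by rewrite /nm normc_def /= expr0n /= addr0 sqrtr_sqr. Qed.
Lemma Re_nm z : complex.Re z <= nm z.
Proof. have := normc_ge_Re z; rewrite normE lecR; apply: le_trans; exact: ler_norm. Qed.
Lemma nm0 : nm 0 = 0.
Proof. by rewrite /nm normr0. Qed.
Lemma nmX x k : nm (x ^+ k) = nm x ^+ k.
Proof. by elim: k => [|k IH]; rewrite ?expr0 ?exprS ?nmM ?IH // /nm normr1. Qed.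
Lemma nm_sum m (F : 'I_m -> C) : nm (\sum_(i < m) F i) <= \sum_(i < m) nm (F i).
Proof.
elim/big_ind2: _ => //; first by rewrite nm0.
by move=> a b c d h1 h2; apply: le_trans (nmD _ _) _; apply: lerD.
Qed.
Definition S (p : {poly C}) := \sum_(i < size p) nm p`_i.
Lemma S_ge0 p : 0 <= S p.
Proof. by apply: sumr_ge0 => i _; apply: nm_ge0. Qed.
Lemma poly_ub (p : {poly C}) z k : ((size p).-1 <= k)%N ->
  nm p.[z] <= S p * (1 + nm z) ^+ k.
Proof.
move=> hk; rewrite horner_coef /S mulr_suml; apply: le_trans (nm_sum _) _.
apply: ler_sum => i _; rewrite nmM nmX; apply: ler_wpM2l; first exact: nm_ge0.
have h0 := nm_ge0 z.
apply: le_trans (_ : (1 + nm z) ^+ i <= _).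
  by apply: lerXn2r; rewrite ?nnegrE ?addr_ge0 // lerDr.
apply: ler_weXn2l; first by rewrite lerDl.
case: i => i /= hi; move: hi hk; case: (size p) => // m; rewrite ltnS /=; apply: leq_trans.
Qed.
Lemma poly_lip (p : {poly C}) z : nm z <= 1 ->
  nm (p.[z] - p.[0]) <= S p * nm z.
Proof.
move=> hz; rewrite !horner_coef -sumrB /S mulr_suml; apply: le_trans (nm_sum _) _.
apply: ler_sum => i _; rewrite -mulrBr nmM; apply: ler_wpM2l; first exact: nm_ge0.
case: i => [[|j] hj] /=; first by rewrite !expr0 subrr nm0 nm_ge0.
rewrite expr0n /= subr0 nmX.
by rewrite exprS; apply: ler_piMr; [apply: nm_ge0| apply: exprn_ile1; [apply: nm_ge0|]].
Qed.
Lemma factor_lb (w z : C) : complex.Re w < 0 -> 0 <= complex.Re z ->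
  (- complex.Re w) / (1 + nm w - complex.Re w) * (1 + nm z) <= nm (z - w).
Proof.
move=> hw hz.
have h1 : complex.Re z - complex.Re w <= nm (z - w) by rewrite -raddfB; apply: Re_nm.
have h2 : nm z <= nm (z - w) + nm w by rewrite -{1}(subrK w z); apply: nmD.
have h3 := nm_ge0 w; have h4 := nm_ge0 (z - w).
rewrite mulrAC ler_pdivrMr; last by lra.
nra.
Qed.
Lemma prod_lb (r : seq C) : (forall w, w \in r -> complex.Re w < 0) ->
  exists2 k, 0 < k & forall z, 0 <= complex.Re z ->
    k * (1 + nm z) ^+ size r <= nm (\prod_(w <- r) (z - w)).
Proof.
elim: r => [|w r IH] hr.
  by exists 1 => // z _; rewrite big_nil expr0 mulr1 /nm normr1.
have [k k0 hk] := IH (fun x hx => hr x (mem_behead (s:=w::r) hx)).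
have hw : complex.Re w < 0 by apply: hr; rewrite mem_head.
exists ((- complex.Re w) / (1 + nm w - complex.Re w) * k).
  apply: mulr_gt0 => //; apply: divr_gt0; first by lra.
  by have := nm_ge0 w; lra.
move=> z hz; rewrite big_cons nmM /= exprS.
rewrite mulrACA; apply: ler_pM.
- apply: mulr_ge0; last by have := nm_ge0 z; lra.
  apply: divr_ge0; first by lra. by have := nm_ge0 w; lra.
- by apply: mulr_ge0; [lra| apply: exprn_ge0; have := nm_ge0 z; lra].
- exact: factor_lb.
- exact: hk.
Qed.
Lemma poly_lb (p : {poly C}) : p \is monic ->
  (forall w, root p w -> complex.Re w < 0) ->
  exists2 k, 0 < k & forall z, 0 <= complex.Re z ->
    k * (1 + nm z) ^+ (size p).-1 <= nm p.[z].
Proof.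
move=> pm hr; have [r hp] := closed_field_poly_normal p.
rewrite (monicP pm) scale1r in hp.
have [k k0 hk] : exists2 k, 0 < k & forall z, 0 <= complex.Re z ->
    k * (1 + nm z) ^+ size r <= nm (\prod_(w <- r) (z - w)).
  by apply: prod_lb => w hw; apply: hr; rewrite hp root_prod_XsubC.
exists k => // z hz; rewrite hp size_prod_XsubC /= horner_prod.
under eq_bigr => w _ do rewrite hornerXsubC.
exact: hk.
Qed.
End S.

Lemma ReM_real (R : realType) (a : R) (z : R[i]) : complex.Re (a%:C * z) = a * complex.Re z.
Proof. by case: z => x y; rewrite /= mul0r subr0. Qed.

Theorem mainTheorem7 (R : realType) (n : nat) (A : 'M[R]_n.+1) :
  Num.sg (\det A) = (-1) ^+ n.+1 ->
  (exists i : 'I_n.+1, hurwitz_stable (row' i (col' i A))) ->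
  exists d : 'rV[R]_n.+1,
    (forall j, 0 < d 0 j) /\ hurwitz_stable (A *m diag_mx d).
Proof.
move=> hdet [i hB].
set B := row' i (col' i A).
set P := char_poly (map_mx (real_complex R) B).
set Q := char_poly (map_mx (real_complex R) A).
have Pm : P \is monic := char_poly_monic _.
have sP : size P = n.+1 := size_char_poly _.
have sQ : size Q = n.+2 := size_char_poly _.
have hroot : forall w, root P w -> complex.Re w < 0.
  by move=> w hw; apply: hB; rewrite eigenvalue_root_char.
have [k k0 hk] := poly_lb Pm hroot; rewrite sP /= in hk.
set p0 := (char_poly B).[0].
have P0 : P.[0] = p0%:C.
  by rewrite /P -map_char_poly -(rmorph0 (real_complex R)) horner_map.
set q0 := (char_poly A).[0].
have Q0 : Q.[0] = q0%:C.
  by rewrite /Q -map_char_poly -(rmorph0 (real_complex R)) horner_map.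
have p0pos : 0 < p0.
  rewrite ltNge; apply/negP => hp0.
  have lc : lead_coef (char_poly B) = 1 := monicP (char_poly_monic B).
  have [N hN] : exists N, forall x, N <= x -> lead_coef (char_poly B) <= (char_poly B).[x].
    by apply: poly_pinfty_gt_lc; rewrite lc ltr01.
  have hb := hN `|N| (ler_norm N); rewrite lc in hb.
  have [x hx /eqP rx] := @polyrcf.poly_ivt R (char_poly B) 0 `|N| (normr_ge0 N)
     (mulr_le0_ge0 hp0 (le_trans ler01 hb)).
  have : complex.Re x%:C < 0.
    by apply: hroot; rewrite /root /P -map_char_poly horner_map rx rmorph0.
  by move: hx; rewrite in_itv /= => /andP[hx0 _]; rewrite ltNge hx0.
have q0pos : 0 < q0.
  have hd : \det A != 0.
    apply/eqP => h0; move: hdet; rewrite h0 sgr0 => /eqP; by rewrite eq_sym signr_eq0.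
  by rewrite /q0 horner_coef0 char_poly_det -hdet -normrEsg normr_gt0.
have SP0 := S_ge0 P; have SQ0 := S_ge0 Q.
set SP := S P; set SQ := S Q.
pose Cc := 4 * SQ / k.
have Cc0 : 0 <= Cc.
  by rewrite /Cc; apply: divr_ge0; [apply: mulr_ge0|apply: ltW].
have CcE : Cc * k = 4 * SQ by rewrite /Cc mulrVK // unitfE gt_eqF.
pose W := (SP * Cc ^+ 2 + SQ * Cc) / q0.
have W0 : 0 <= W.
  rewrite /W; apply: divr_ge0; last by lra.
  by apply: addr_ge0; apply: mulr_ge0 => //; rewrite exprn_ge0.
have WE : W * q0 = SP * Cc ^+ 2 + SQ * Cc by rewrite /W mulrVK // unitfE gt_eqF.
pose T := 2 + Cc + W.
have T0 : 0 < T by rewrite /T; lra.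
pose eps := T^-1.
have eps0 : 0 < eps by rewrite invr_gt0.
have epsT : eps * T = 1 by rewrite mulVf // gt_eqF.
exists (dvec i eps); split.
  by move=> j; rewrite mxE; case: ifP.
move=> z hz; rewrite ltNge; apply/negP => hRe.
have : root (char_poly (map_mx (real_complex R) (A *m diag_mx (dvec i eps))))  z.
  by rewrite -eigenvalue_root_char.
rewrite /root char_poly_horner map_mxM map_diag_mx.
have -> : map_mx (real_complex R) (dvec i eps) = dvec i eps%:C.
  by apply/rowP => j; rewrite !mxE; case: ifP.
rewrite key_det -map_col' -map_row' -!char_poly_horner -/P -/Q => /eqP heq.
have he1 : 2 * eps + eps * Cc + eps * W = 1 by move: epsT; rewrite /T; nra.
have eC0 : 0 <= eps * Cc by rewrite mulr_ge0 // ltW.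
have eW0 : 0 <= eps * W by rewrite mulr_ge0 // ltW.
set x := nm z.
have x0 : 0 <= x := nm_ge0 z.
have nm1e : nm (1 - eps%:C) = 1 - eps.
  by rewrite -(rmorph1 (real_complex R)) -rmorphB nmR ger0_norm //; lra.
have nme : nm eps%:C = eps by rewrite nmR ger0_norm // ltW.
have hnorm : (1 - eps) * (x * nm P.[z]) = eps * nm Q.[z].
  have : (1 - eps%:C) * (z * P.[z]) = - (eps%:C * Q.[z]) by apply/eqP; rewrite -subr_eq0 opprK heq.
  by move=> /(congr1 (@nm R)); rewrite nmN !nmM nm1e nme.
have hPz := hk z hRe.
have hQz : nm Q.[z] <= SQ * (1 + x) ^+ n.+1 by apply: poly_ub; rewrite sQ.
pose y := (1 + x) ^+ n.
have y0 : 0 < y by rewrite /y exprn_gt0 //; lra.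
have hA : (1 - eps) * x * k <= eps * SQ * (1 + x).
  rewrite -(ler_pM2r y0).
  apply: le_trans (_ : (1 - eps) * (x * nm P.[z]) <= _).
    rewrite -mulrA -mulrA; apply: ler_wpM2l; first by lra.
    by rewrite -mulrA; apply: ler_wpM2l.
  rewrite hnorm -!mulrA; apply: ler_wpM2l; first exact: ltW.
  by rewrite /y -exprS.
have hB4 : 4 * (1 - eps) * x <= eps * Cc * (1 + x).
  rewrite -(ler_pM2r k0).
  have -> : eps * Cc * (1 + x) * k = eps * (1 + x) * (Cc * k) by ring.
  rewrite CcE; by have := hA; nra.
have hx1 : x <= eps * Cc.
  have h1 : eps * Cc * x <= (1 - 2 * eps) * x by apply: ler_wpM2r => //; lra.
  have h2 : eps * x <= 1 / 2 * x by apply: ler_wpM2r => //; lra.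
  nra.
have hxle1 : x <= 1 by lra.
set e := eps%:C.
have hdec : ((1 - eps) * p0)%:C * z =
    - ((1 - e) * z * (P.[z] - p0%:C) + e * (Q.[z] - q0%:C)) - (eps * q0)%:C.
  rewrite !rmorphM rmorphB rmorph1 -/e.
  apply/eqP; rewrite -subr_eq0; apply/eqP.
  transitivity ((1 - e) * (z * P.[z]) + e * Q.[z]); first by ring.
  exact: heq.
have := congr1 (@complex.Re R) hdec.
rewrite ReM_real raddfB /= => hre.
have hu : nm ((1 - e) * z * (P.[z] - p0%:C)) <= SP * x * x.
  rewrite !nmM nm1e -/x -P0.
  have := poly_lip P hxle1; rewrite -/SP -/x => hl.
  have hpl := nm_ge0 (P.[z] - P.[0]).
  have h1 : x * nm (P.[z] - P.[0]) <= x * (SP * x) by apply: ler_wpM2l.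
  have h2 : 0 <= x * nm (P.[z] - P.[0]) by apply: mulr_ge0.
  have h3 : (1 - eps) * (x * nm (P.[z] - P.[0])) <= x * nm (P.[z] - P.[0]).
    by rewrite ler_piMl //; lra.
  rewrite -mulrA; apply: le_trans h3 _; apply: le_trans h1 _; rewrite mulrCA mulrA.
  by [].
have hv : nm (e * (Q.[z] - q0%:C)) <= eps * (SQ * x).
  rewrite nmM nme -Q0; apply: ler_wpM2l; first exact: ltW.
  exact: poly_lip.
set u := (1 - e) * z * (P.[z] - p0%:C) in hdec hre hu.
set v := e * (Q.[z] - q0%:C) in hdec hre hv.
have hRe2 : complex.Re (- (u + v)) <= SP * x * x + eps * (SQ * x).
  apply: le_trans (Re_nm _) _; rewrite nmN; apply: le_trans (nmD _ _) _.
  exact: lerD.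
have hL : 0 <= (1 - eps) * p0 * complex.Re z.
  by apply: mulr_ge0 => //; apply: mulr_ge0; lra.
have hxx : SP * x * x <= SP * (eps * Cc) * (eps * Cc).
  by apply: ler_pM => //; [apply: mulr_ge0|apply: ler_wpM2l].
have hsx : SQ * x <= SQ * (eps * Cc) by apply: ler_wpM2l.
have key : eps * q0 <= eps * (eps * (W * q0)).
  rewrite WE; nra.
have : q0 <= eps * W * q0.
  by rewrite -mulrA; rewrite -(ler_pM2l eps0).
nra.
Qed.
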